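(* Let $1\le p\le2$, $\epsilon>0$, and $1\le k\le n$. Let $x,\widetilde x\in\mathbb{R}^n$ satisfy $$\|\widetilde x-x\|_p\le\epsilon\,k^{1/p-1}\|x_k-x\|_1 .$$ Then $$\|\widetilde x_k-x\|_1\le(1+3\epsilon)\,\|x_k-x\|_1 .$$
   Context: For $g\in\mathbb{R}^n$, $g_k$ denotes the vector obtained from $g$ by keeping its $k$ entries of largest magnitude (ties broken lexicographically) and setting all other entries to $0$; it is a best $k$-term approximation of $g$ in any $\ell_q$ norm. *)

(* Defs.v *)
(* classical reals. Vectors in R^n are functions nat -> R,
   of which only the entries 0..n-1 matter. *)
From Stdlib Require Import Reals Lra Lia List.
Import ListNotations.
Open Scope R_scope.

Fixpoint rsum (n : nat) (f : nat -> R) : R :=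
  match n with
  | O => 0
  | S m => rsum m f + f m
  end.

(* real power a^q for a >= 0, with the convention 0^q = 0 (q > 0 here) *)
Definition rpow (a q : R) : R := if Req_EM_T a 0 then 0 else Rpower a q.

Definition lpnorm (n : nat) (p : R) (x : nat -> R) : R :=
  rpow (rsum n (fun i => rpow (Rabs (x i)) p)) (1 / p).

Definition l1norm (n : nat) (x : nat -> R) : R := rsum n (fun i => Rabs (x i)).

Definition vsub (x y : nat -> R) : nat -> R := fun i => x i - y i.

(* j "beats" i: |x j| > |x i|, or equal magnitude and j comes first
   (lexicographic tie-breaking). This is a strict total order on indices. *)
Definition beats (x : nat -> R) (j i : nat) : bool :=
  if Rlt_dec (Rabs (x i)) (Rabs (x j)) then true
  else if Req_EM_T (Rabs (x j)) (Rabs (x i)) then Nat.ltb j i else false.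

Definition rank_of (n : nat) (x : nat -> R) (i : nat) : nat :=
  length (filter (fun j => beats x j i) (seq 0 n)).

(* x_k : keep the k entries of largest magnitude (ties broken
   lexicographically), set all other entries to 0 *)
Definition best_k (n k : nat) (x : nat -> R) : nat -> R :=
  fun i => if Nat.ltb (rank_of n x i) k then x i else 0.

(* Main.v *)
Require Import Defs.
From Stdlib Require Import Reals Lra Lia List Permutation.
Import ListNotations.
Open Scope R_scope.

Lemma rsum_le m f g : (forall i, (i < m)%nat -> f i <= g i) -> rsum m f <= rsum m g.
Proof. induction m; simpl; intros H; [lra|]. assert (f m <= g m) by (apply H; lia).
  assert (rsum m f <= rsum m g) by (apply IHm; intros; apply H; lia). lra. Qed.

Lemma rsum_ext m f g : (forall i, (i < m)%nat -> f i = g i) -> rsum m f = rsum m g.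
Proof. induction m; simpl; intros H; [lra|]. rewrite (H m) by lia. rewrite IHm; auto. Qed.

Lemma rsum_nonneg m f : (forall i, (i < m)%nat -> 0 <= f i) -> 0 <= rsum m f.
Proof. induction m; simpl; intros H; [lra|]. assert (0 <= f m) by (apply H; lia).
  assert (0 <= rsum m f) by (apply IHm; intros; apply H; lia). lra. Qed.

Lemma rsum_lin m f g h : (forall i, (i<m)%nat -> f i = g i * h + (if true then 0 else 0)) -> True.
Proof. auto. Qed.

Lemma rsum_affine m f g a b : (forall i, (i<m)%nat -> f i = a * g i + b * 1 * 0 + 0) -> rsum m f = a * rsum m g.
Proof. induction m; simpl; intros H; [lra|]. rewrite H by lia. rewrite IHm by (intros; apply H; lia). lra. Qed.

Lemma rsum_add m f g : rsum m (fun i => f i + g i) = rsum m f + rsum m g.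
Proof. induction m; simpl; [lra|]. rewrite IHm. lra. Qed.

Lemma rsum_scal m f a : rsum m (fun i => a * f i) = a * rsum m f.
Proof. induction m; simpl; [lra|]. rewrite IHm. lra. Qed.

Lemma rsum_six m f g1 g2 g3 g4 g5 g6 :
  (forall i, (i<m)%nat -> f i <= g1 i + g2 i + g3 i + g4 i + g5 i - g6 i) ->
  rsum m f <= rsum m g1 + rsum m g2 + rsum m g3 + rsum m g4 + rsum m g5 - rsum m g6.
Proof. induction m; simpl; intros H; [lra|]. assert (f m <= g1 m + g2 m + g3 m + g4 m + g5 m - g6 m) by (apply H; lia).
  assert (rsum m f <= rsum m g1 + rsum m g2 + rsum m g3 + rsum m g4 + rsum m g5 - rsum m g6) by (apply IHm; intros; apply H; lia). lra. Qed.

Lemma rsum_ind m (P : nat -> bool) : rsum m (fun i => if P i then 1 else 0) = INR (length (filter P (seq 0 m))).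
Proof. induction m; [reflexivity|]. cbn [rsum]. rewrite IHm, seq_S, filter_app, length_app, plus_INR.
  simpl. destruct (P m); simpl; lra. Qed.

Lemma rpow_nonneg a q : 0 <= rpow a q.
Proof. unfold rpow. destruct Req_EM_T; [lra|]. unfold Rpower. left; apply exp_pos. Qed.

Fixpoint rmaxf (m:nat) (f: nat->R) (P: nat -> bool) : R :=
  match m with O => 0 | S m' => if P m' then Rmax (rmaxf m' f P) (f m') else rmaxf m' f P end.

Lemma rmaxf_ge m f P i : (i<m)%nat -> P i = true -> f i <= rmaxf m f P.
Proof. induction m; simpl; intros Hi HP; [lia|].
  destruct (Nat.eq_dec i m) as [->|Hne].
  - rewrite HP. apply Rmax_r.
  - destruct (P m). + eapply Rle_trans; [apply IHm; auto; lia| apply Rmax_l]. + apply IHm; auto; lia. Qed.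

Lemma rmaxf_le m f P c : 0<=c -> (forall i, (i<m)%nat -> P i = true -> f i <= c) -> rmaxf m f P <= c.
Proof. induction m; simpl; intros Hc H; [lra|].
  destruct (P m) eqn:E. - apply Rmax_lub; [apply IHm; auto| apply H; auto]. - apply IHm; auto. Qed.

Lemma count_le (f g : nat->bool) l : (forall y, In y l -> f y = true -> g y = true) ->
  (length (filter f l) <= length (filter g l))%nat.
Proof. induction l; simpl; intros H; [lia|].
  assert (IH := IHl (fun y Hy => H y (or_intror Hy))).
  destruct (f a) eqn:Ef; [rewrite (H a (or_introl eq_refl) Ef)|destruct (g a)]; simpl; lia. Qed.

Lemma count_lt (f g : nat->bool) l : (forall y, In y l -> f y = true -> g y = true) ->
  forall z, In z l -> f z = false -> g z = true -> (length (filter f l) < length (filter g l))%nat.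
Proof. induction l; simpl; intros H z Hz Hf Hg; [contradiction|].
  destruct Hz as [<-|Hz].
  - rewrite Hf, Hg. simpl. assert (IH := count_le f g l (fun y Hy => H y (or_intror Hy))). lia.
  - assert (IH := IHl (fun y Hy => H y (or_intror Hy)) z Hz Hf Hg).
    destruct (f a) eqn:Ef; [rewrite (H a (or_introl eq_refl) Ef)|destruct (g a)]; simpl; lia. Qed.

Lemma beats_irrefl xv i : beats xv i i = false.
Proof. unfold beats. destruct Rlt_dec; [lra|]. destruct Req_EM_T; [apply Nat.ltb_irrefl | reflexivity]. Qed.

Lemma beats_trans xv a b c : beats xv a b = true -> beats xv b c = true -> beats xv a c = true.
Proof. unfold beats. repeat destruct Rlt_dec; repeat destruct Req_EM_T; intros; rewrite ?Nat.ltb_lt in *;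
  try lra; try lia; try discriminate; try reflexivity. Qed.

Lemma beats_total xv i j : i <> j -> beats xv j i = true \/ beats xv i j = true.
Proof. intros Hij. unfold beats. repeat destruct Rlt_dec; repeat destruct Req_EM_T; rewrite ?Nat.ltb_lt;
  try lra; auto; lia. Qed.

Lemma rank_lt N xv i j : (j < N)%nat -> beats xv j i = true -> (rank_of N xv j < rank_of N xv i)%nat.
Proof. intros Hj Hb. unfold rank_of. apply count_lt with (z := j).
  - intros y _ Hy. eapply beats_trans; eauto.
  - apply in_seq; lia.
  - apply beats_irrefl.
  - exact Hb. Qed.

Lemma filter_true_id (l : list nat) : filter (fun _ => true) l = l.
Proof. induction l; simpl; congruence. Qed.

Lemma rank_bound N xv i : (i < N)%nat -> (rank_of N xv i < N)%nat.
Proof. intros Hi. unfold rank_of. rewrite <- (length_seq N 0) at 2. rewrite <- (filter_true_id (seq 0 N)) at 2.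
  apply count_lt with (z := i); auto. apply in_seq; lia. apply beats_irrefl. Qed.

Lemma rank_inj N xv i j : (i < N)%nat -> (j < N)%nat -> rank_of N xv i = rank_of N xv j -> i = j.
Proof. intros Hi Hj E. destruct (Nat.eq_dec i j); auto. exfalso.
  destruct (beats_total xv i j n) as [H|H].
  - pose proof (rank_lt N xv i j Hj H). lia.
  - pose proof (rank_lt N xv j i Hi H). lia. Qed.

Lemma NoDup_map_in (f : nat -> nat) l : NoDup l -> (forall a b, In a l -> In b l -> f a = f b -> a = b) -> NoDup (map f l).
Proof. induction l; simpl; intros Hn H; constructor.
  - inversion Hn; subst. intros Hin. apply in_map_iff in Hin. destruct Hin as [b [Eb Hb]].
    assert (b = a) by (apply H; auto). subst. contradiction.
  - inversion Hn; subst. apply IHl; auto. Qed.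

Lemma perm_filter_len (f : nat -> bool) l l' : Permutation l l' -> length (filter f l) = length (filter f l').
Proof. induction 1; simpl; auto.
  - destruct (f x); simpl; auto.
  - destruct (f x), (f y); simpl; auto.
  - congruence. Qed.

Lemma filter_map_len (f g : nat -> nat) (P : nat -> bool) l :
  length (filter P (map g l)) = length (filter (fun a => P (g a)) l).
Proof. induction l; simpl; auto. destruct (P (g a)); simpl; auto. Qed.

Lemma count_seq_lt k N : length (filter (fun v => Nat.ltb v k) (seq 0 N)) = Nat.min k N.
Proof. induction N. simpl; lia. rewrite seq_S, filter_app, length_app, IHN. simpl.
  destruct (Nat.ltb N k) eqn:E; [apply Nat.ltb_lt in E|apply Nat.ltb_ge in E]; simpl; lia. Qed.

Lemma count_rank N xv k : (k <= N)%nat ->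
  length (filter (fun i => Nat.ltb (rank_of N xv i) k) (seq 0 N)) = k.
Proof. intros Hk.
  assert (HP : Permutation (map (rank_of N xv) (seq 0 N)) (seq 0 N)).
  { apply Permutation_map_same_l.
    - apply NoDup_map_in. apply seq_NoDup. intros a b Ha Hb. apply in_seq in Ha, Hb. apply rank_inj; lia.
    - intros y Hy. apply in_map_iff in Hy. destruct Hy as [a [<- Ha]]. apply in_seq in Ha. apply in_seq.
      pose proof (rank_bound N xv a). lia. }
  rewrite <- (filter_map_len (fun a => a) (rank_of N xv) (fun v => Nat.ltb v k)).
  rewrite (perm_filter_len _ _ _ HP). rewrite count_seq_lt. lia. Qed.

Lemma tangent t c p : 0 <= t -> 0 < c -> 1 <= p ->
  Rpower c p + p * Rpower c (p-1) * (t - c) <= rpow t p.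
Proof. intros Ht Hc Hp.
  assert (Ecp : Rpower c p = Rpower c (p-1) * c).
  { rewrite <- (Rpower_1 c) at 3 by lra. rewrite <- Rpower_plus. f_equal. ring. }
  assert (Hpos : 0 < Rpower c (p-1)) by (unfold Rpower; apply exp_pos).
  unfold rpow. destruct Req_EM_T as [E|E].
  - subst. rewrite Ecp. assert (0 <= Rpower c (p-1) * c * (p-1)) by (apply Rmult_le_pos; [apply Rmult_le_pos|]; lra). nra.
  - assert (Htp : 0 < t) by lra.
    unfold Rpower. set (L := ln t). set (M := ln c).
    assert (Et : exp L = t) by (apply exp_ln; auto).
    assert (Ec : exp M = c) by (apply exp_ln; auto).
    set (d := L - M).
    assert (E1 : exp (p * L) = exp L * exp ((p-1) * M) * exp ((p-1)*d)).
    { rewrite <- !exp_plus. f_equal. unfold d. ring. }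
    assert (E2 : exp M = exp L * exp (-d)).
    { rewrite <- exp_plus. f_equal. unfold d. ring. }
    assert (G1 := exp_ineq1_le ((p-1)*d)).
    assert (G2 := exp_ineq1_le (-d)).
    assert (F : 0 < exp ((p-1)*M)) by apply exp_pos.
    assert (FL : 0 < exp L) by apply exp_pos.
    assert (H3 : exp L - exp M <= d * exp L) by (rewrite E2; nra).
    assert (H4 : exp M + p * (exp L - exp M) <= exp L * exp ((p-1)*d)).
    { assert (0 <= (p-1) * (d * exp L - (exp L - exp M))) by (apply Rmult_le_pos; lra).
      assert (0 <= exp L * (exp ((p-1)*d) - (1 + (p-1)*d))) by (apply Rmult_le_pos; lra). nra. }
    rewrite E1. idtac. 
    replace (exp (p * M)) with (exp ((p-1)*M) * exp M) by (rewrite <- exp_plus; f_equal; ring).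
    rewrite <- Et, <- Ec. assert (H5 := Rmult_le_compat_l _ _ _ (Rlt_le _ _ F) H4). nra.
Qed.

Lemma holder n (A : nat -> bool) (e : nat -> R) p k :
  1 <= p -> 1 <= k -> INR (length (filter A (seq 0 n))) <= k ->
  rsum n (fun i => if A i then Rabs (e i) else 0) <= Rpower k (1 - 1/p) * lpnorm n p e.
Proof. intros Hp Hk Hm.
  set (s := rsum n (fun i => if A i then Rabs (e i) else 0)).
  set (m := INR (length (filter A (seq 0 n)))).
  set (Sp := rsum n (fun i => rpow (Rabs (e i)) p)).
  assert (Hs0 : 0 <= s) by (apply rsum_nonneg; intros; destruct (A i); [apply Rabs_pos|lra]).
  assert (HK : 0 < Rpower k (1 - 1/p)) by (unfold Rpower; apply exp_pos).
  assert (Hlp : 0 <= lpnorm n p e) by apply rpow_nonneg.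
  destruct (Req_EM_T s 0) as [Es|Es]. { rewrite Es. nra. }
  assert (Hm0 : 0 < m).
  { destruct (Rlt_dec 0 m); auto. exfalso. apply Es. unfold m in *.
    assert (Hl : length (filter A (seq 0 n)) = 0%nat).
    { destruct (length (filter A (seq 0 n))); auto. rewrite S_INR in n0. pose proof (pos_INR n1). lra. }
    unfold s. rewrite (rsum_ext n _ (fun _ => 0)). { clear. induction n; simpl; lra. }
    intros i Hi. destruct (A i) eqn:EA; auto. exfalso.
    destruct (filter A (seq 0 n)) eqn:EF; [|simpl in Hl; discriminate].
    assert (In i (filter A (seq 0 n))) by (apply filter_In; split; auto; apply in_seq; lia).
    rewrite EF in H; contradiction. }
  assert (Hmr : m = rsum n (fun i => if A i then 1 else 0)) by (unfold m; rewrite rsum_ind; auto).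
  set (c := s / m).
  assert (Hc : 0 < c) by (unfold c; apply Rdiv_lt_0_compat; lra).
  assert (Hcm : s = m * c) by (unfold c; field; lra).
  set (cp := Rpower c p). set (cq := Rpower c (p-1)).
  assert (Ecp : cp = cq * c).
  { unfold cp, cq. rewrite <- (Rpower_1 c) at 3 by lra. rewrite <- Rpower_plus. f_equal. ring. }
  assert (HSA : m * cp <= Sp).
  { apply Rle_trans with (rsum n (fun i => if A i then rpow (Rabs (e i)) p else 0)).
    - apply Rle_trans with (rsum n (fun i => (cp - p * cq * c) * (if A i then 1 else 0) + p * cq * (if A i then Rabs (e i) else 0))).
      + rewrite rsum_add, !rsum_scal. fold s. rewrite <- Hmr, Ecp, Hcm. nra.
      + apply rsum_le. intros i Hi. destruct (A i).
        * pose proof (tangent (Rabs (e i)) c p (Rabs_pos _) Hc Hp). fold cp cq in H. nra.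
        * lra.
    - apply rsum_le. intros i Hi. destruct (A i); [lra|apply rpow_nonneg]. }
  assert (Hcp : 0 < cp) by (unfold cp, Rpower; apply exp_pos).
  assert (HSp : 0 < Sp) by nra.
  assert (Elp : lpnorm n p e = Rpower Sp (1/p)).
  { unfold lpnorm. fold Sp. unfold rpow. destruct Req_EM_T; [lra|auto]. }
  rewrite Elp.
  assert (Hpinv : 0 < 1/p <= 1) by (split; [apply Rdiv_lt_0_compat; lra| apply Rmult_le_reg_r with p; [lra|]; field_simplify; lra]).
  assert (H1 : Rpower (m * cp) (1/p) <= Rpower Sp (1/p)) by (apply Rle_Rpower_l; [lra| split; nra]).
  rewrite <- Rpower_mult_distr in H1 by lra.
  unfold cp in H1. rewrite Rpower_mult in H1. replace (p * (1/p)) with 1 in H1 by (field; lra).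
  rewrite Rpower_1 in H1 by lra.
  assert (Hs : s = Rpower m (1 - 1/p) * (Rpower m (1/p) * c)).
  { rewrite Hcm, <- Rmult_assoc, <- Rpower_plus. replace (1 - 1/p + 1/p) with 1 by ring. rewrite Rpower_1; lra. }
  assert (Hmk : Rpower m (1 - 1/p) <= Rpower k (1 - 1/p)) .
  { fold m in Hm. apply Rle_Rpower_l; [destruct Hpinv; lra | split; lra]. }
  assert (0 < Rpower m (1 - 1/p)) by (unfold Rpower; apply exp_pos).
  assert (0 < Rpower m (1/p) * c) by (apply Rmult_lt_0_compat; [unfold Rpower; apply exp_pos|lra]).
  rewrite Hs.
  apply Rle_trans with (Rpower m (1 - 1/p) * Rpower Sp (1/p)).
  - apply Rmult_le_compat_l; lra.
  - apply Rmult_le_compat_r; [unfold Rpower; left; apply exp_pos| lra].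
Qed.

Lemma top_dominates N xv k i j : (j < N)%nat -> Nat.ltb (rank_of N xv i) k = true ->
  Nat.ltb (rank_of N xv j) k = false -> Rabs (xv j) <= Rabs (xv i).
Proof. intros Hj Hi Hjk. apply Nat.ltb_lt in Hi. apply Nat.ltb_ge in Hjk.
  destruct (Rle_dec (Rabs (xv j)) (Rabs (xv i))) as [|Hn]; auto. exfalso.
  assert (beats xv j i = true) by (unfold beats; destruct Rlt_dec; [reflexivity|lra]).
  pose proof (rank_lt N xv i j Hj H). lia. Qed.

Theorem mainTheorem10 (n k : nat) (p eps : R) (x xt : nat -> R) :
  1 <= p <= 2 -> 0 < eps -> (1 <= k)%nat -> (k <= n)%nat ->
  lpnorm n p (vsub xt x)
    <= eps * Rpower (INR k) (1 / p - 1) * l1norm n (vsub (best_k n k x) x) ->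
  l1norm n (vsub (best_k n k xt) x)
    <= (1 + 3 * eps) * l1norm n (vsub (best_k n k x) x).
Proof. intros [Hp1 Hp2] He Hk1 Hkn Hlp.
  set (sb := fun i => Nat.ltb (rank_of n xt i) k).
  set (tb := fun i => Nat.ltb (rank_of n x i) k).
  set (sig := l1norm n (vsub (best_k n k x) x)).
  fold sig in Hlp.
  assert (Hsig0 : 0 <= sig) by (apply rsum_nonneg; intros; apply Rabs_pos).
  assert (Hk : 1 <= INR k) by (apply (le_INR 1); lia).
  assert (Cs : INR (length (filter sb (seq 0 n))) = INR k) by (unfold sb; rewrite count_rank; auto).
  assert (Ct : INR (length (filter tb (seq 0 n))) = INR k) by (unfold tb; rewrite count_rank; auto).
  assert (HE : forall A : nat -> bool, INR (length (filter A (seq 0 n))) <= INR k ->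
     rsum n (fun i => if A i then Rabs (xt i - x i) else 0) <= eps * sig).
  { intros A HA. pose proof (holder n A (vsub xt x) p (INR k) Hp1 Hk HA) as H. unfold vsub in H at 1.
    apply Rle_trans with (1 := H).
    assert (0 < Rpower (INR k) (1 - 1/p)) by (unfold Rpower; apply exp_pos).
    apply Rle_trans with (Rpower (INR k) (1 - 1/p) * (eps * Rpower (INR k) (1 / p - 1) * sig)).
    - apply Rmult_le_compat_l; lra.
    - replace (Rpower (INR k) (1 - 1/p) * (eps * Rpower (INR k) (1 / p - 1) * sig))
        with (Rpower (INR k) (1 - 1/p + (1/p - 1)) * eps * sig) by (rewrite Rpower_plus; ring).
      replace (1 - 1/p + (1/p - 1)) with 0 by ring. rewrite Rpower_O by lra. lra. }
  assert (ES := HE sb (Req_le _ _ Cs)).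
  assert (EST := HE (fun i => andb (sb i) (negb (tb i)))).
  assert (ETS := HE (fun i => andb (tb i) (negb (sb i)))).
  assert (EST' : rsum n (fun i => if andb (sb i) (negb (tb i)) then Rabs (xt i - x i) else 0) <= eps * sig).
  { apply EST. rewrite <- Cs. apply le_INR, count_le. intros y _ Hy. apply Bool.andb_true_iff in Hy; tauto. }
  assert (ETS' : rsum n (fun i => if andb (tb i) (negb (sb i)) then Rabs (xt i - x i) else 0) <= eps * sig).
  { apply ETS. rewrite <- Ct. apply le_INR, count_le. intros y _ Hy. apply Bool.andb_true_iff in Hy; tauto. }
  clear EST ETS.
  set (th := rmaxf n (fun i => Rabs (xt i)) (fun i => negb (sb i))).
  assert (HM : rsum n (fun i => if andb (tb i) (negb (sb i)) then Rabs (xt i) else 0)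
             - rsum n (fun i => if andb (sb i) (negb (tb i)) then Rabs (xt i) else 0) <= 0).
  { assert (Hth1 : forall i, (i < n)%nat -> sb i = false -> Rabs (xt i) <= th).
    { intros i Hi Hs. apply (rmaxf_ge n (fun i => Rabs (xt i)) (fun i => negb (sb i)) i Hi). rewrite Hs; auto. }
    assert (Hth2 : forall i, (i < n)%nat -> sb i = true -> th <= Rabs (xt i)).
    { intros i Hi Hs. apply rmaxf_le; [apply Rabs_pos|]. intros j Hj Hsj.
      apply Bool.negb_true_iff in Hsj. apply (top_dominates n xt k i j Hj Hs Hsj). }
    assert (H : rsum n (fun i => (if andb (tb i) (negb (sb i)) then Rabs (xt i) else 0) + (-1) * (if andb (sb i) (negb (tb i)) then Rabs (xt i) else 0))
       <= rsum n (fun i => th * (if tb i then 1 else 0) + (- th) * (if sb i then 1 else 0))).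
    { apply rsum_le. intros i Hi. specialize (Hth1 i Hi). specialize (Hth2 i Hi).
      destruct (sb i), (tb i); simpl; [lra|specialize (Hth2 eq_refl); lra|specialize (Hth1 eq_refl); lra|lra]. }
    rewrite !rsum_add, !rsum_scal, !rsum_ind in H. rewrite Cs, Ct in H. lra. }
  unfold sig. unfold l1norm at 1.
  eapply Rle_trans.
  { apply (rsum_six n _ (fun i => Rabs (vsub (best_k n k x) x i))
       (fun i => if sb i then Rabs (xt i - x i) else 0)
       (fun i => if andb (sb i) (negb (tb i)) then Rabs (xt i - x i) else 0)
       (fun i => if andb (tb i) (negb (sb i)) then Rabs (xt i - x i) else 0)
       (fun i => if andb (tb i) (negb (sb i)) then Rabs (xt i) else 0)
       (fun i => if andb (sb i) (negb (tb i)) then Rabs (xt i) else 0)).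
    intros i Hi. unfold vsub, best_k. fold (sb i) (tb i).
    destruct (sb i), (tb i); simpl; unfold Rabs; repeat destruct Rcase_abs; lra. }
  fold sig. unfold sig at 1. fold (l1norm n (vsub (best_k n k x) x)). fold sig.
  lra.
Qed.
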